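(* Let $S$ be a complete metric space with distance $d$, and let $\preceq$ be a topological orientation on $S$. Assume that every right-bounded pair in $S$ has a join, and that $h:S\to\mathbb{R}$ is continuous and a discriminator. Then $(S,\preceq)$ is a cc sponge.
   Context: An orientation on $S$ is a reflexive, antisymmetric binary relation $\preceq$; it is a topological orientation if $\preceq$ is a closed subset of $S\times S$. For $P\subseteq S$: $P$ is right-bounded if some $s\in S$ has $p\preceq s$ for all $p\in P$. The join of $P$ is an element $x$ with $p\preceq x$ for all $p\in P$ and $x\preceq y$ for every $y$ with $p\preceq y$ for all $p\in P$. $(S,\preceq)$ is a cc sponge if every nonempty right-bounded subset has a join. A function $h:S\to\mathbb{R}$ is a discriminator if for every $\varepsilon>0$ there is $\delta>0$ such that for all $x,y\in S$, $x\preceq y$ and $h(y)<h(x)+\delta$ imply $d(x,y)<\varepsilon$. *)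

(* Defs.v *)
From Stdlib Require Import Reals.
Open Scope R_scope.

Definition is_metric {S : Type} (d : S -> S -> R) : Prop :=
  (forall x y, 0 <= d x y) /\
  (forall x y, d x y = 0 <-> x = y) /\
  (forall x y, d x y = d y x) /\
  (forall x y z, d x z <= d x y + d y z).

Definition cauchy_seq {S : Type} (d : S -> S -> R) (u : nat -> S) : Prop :=
  forall eps, 0 < eps -> exists N, forall m n, (N <= m)%nat -> (N <= n)%nat ->
    d (u m) (u n) < eps.

Definition seq_converges_to {S : Type} (d : S -> S -> R) (u : nat -> S) (l : S) : Prop :=
  forall eps, 0 < eps -> exists N, forall n, (N <= n)%nat -> d (u n) l < eps.

Definition complete_metric {S : Type} (d : S -> S -> R) : Prop :=
  forall u, cauchy_seq d u -> exists l, seq_converges_to d u l.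

Definition metric_continuous {S : Type} (d : S -> S -> R) (h : S -> R) : Prop :=
  forall x eps, 0 < eps -> exists delta, 0 < delta /\
    forall y, d x y < delta -> Rabs (h y - h x) < eps.

Definition orientation {S : Type} (le : S -> S -> Prop) : Prop :=
  (forall x, le x x) /\ (forall x y, le x y -> le y x -> x = y).

(* the relation le is a closed subset of S x S (product of metric topologies):
   its complement is open, i.e. contains a product of balls around each of its points *)
Definition closed_rel {S : Type} (d : S -> S -> R) (le : S -> S -> Prop) : Prop :=
  forall x y, ~ le x y -> exists r, 0 < r /\
    forall x' y', d x x' < r -> d y y' < r -> ~ le x' y'.

Definition topological_orientation {S : Type} (d : S -> S -> R)
  (le : S -> S -> Prop) : Prop := orientation le /\ closed_rel d le.

Definition right_bounded {S : Type} (le : S -> S -> Prop) (P : S -> Prop) : Prop :=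
  exists s, forall p, P p -> le p s.

Definition is_join {S : Type} (le : S -> S -> Prop) (P : S -> Prop) (x : S) : Prop :=
  (forall p, P p -> le p x) /\
  (forall y, (forall p, P p -> le p y) -> le x y).

Definition cc_sponge {S : Type} (le : S -> S -> Prop) : Prop :=
  forall P : S -> Prop, (exists p, P p) -> right_bounded le P ->
    exists x, is_join le P x.

Definition discriminator {S : Type} (d : S -> S -> R) (le : S -> S -> Prop)
  (h : S -> R) : Prop :=
  forall eps, 0 < eps -> exists delta, 0 < delta /\
    forall x y, le x y -> h y < h x + delta -> d x y < eps.

Definition pair_set {S : Type} (a b : S) : S -> Prop := fun p => p = a \/ p = b.

(* Main.v *)
Require Import Defs.
From Stdlib Require Import Reals.
From Stdlib Require Import Lra Lia Classical ClassicalEpsilon.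
Open Scope R_scope.

Lemma small_inv (eps : R) : 0 < eps -> exists N, forall n, (N <= n)%nat -> / (INR n + 1) < eps.
Proof.
  intros He. destruct (archimed_cor1 eps He) as [N [HN HN0]].
  exists N. intros n Hn.
  apply Rle_lt_trans with (/ INR N); auto.
  apply Rinv_le_contravar.
  - apply lt_0_INR; lia.
  - apply le_INR in Hn. lra.
Qed.

Theorem mainTheorem4 (S : Type) (d : S -> S -> R) (le : S -> S -> Prop) (h : S -> R)
  (Hd : is_metric d) (Hcomplete : complete_metric d)
  (Hle : topological_orientation d le)
  (Hpair : forall a b : S, right_bounded le (pair_set a b) ->
             exists x, is_join le (pair_set a b) x)
  (Hcont : metric_continuous d h) (Hdisc : discriminator d le h) :
  cc_sponge le.
Proof.
  destruct Hd as [Hd0 [Hdeq [Hsym Htri]]].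
  destruct Hle as [[Hrefl Hanti] Hclosed].
  assert (Hkey : forall x y, le x y -> h y <= h x -> x = y).
  { intros x y Hxy Hh. apply Hdeq.
    destruct (Rle_lt_or_eq_dec 0 (d x y) (Hd0 x y)) as [Hlt|Heq]; [|auto].
    exfalso. destruct (Hdisc (d x y) Hlt) as [delta [Hdel H]].
    specialize (H x y Hxy). lra. }
  assert (Hmono : forall x y, le x y -> h x <= h y).
  { intros x y Hxy. destruct (Rle_dec (h x) (h y)) as [r|r]; auto.
    assert (x = y) by (apply Hkey; auto; lra). subst; lra. }
  intros P [p0 Hp0] [s Hs].
  set (U := fun u => forall p, P p -> le p u).
  set (L := fun x => forall u, U u -> le x u).
  assert (HsU : U s) by exact Hs.
  assert (HPL : forall p, P p -> L p) by (intros p Hp u Hu; apply Hu; auto).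
  assert (Hjoin : forall x y, L x -> L y -> exists j, L j /\ le x j /\ le y j).
  { intros x y Hx Hy.
    destruct (Hpair x y) as [j [Hj1 Hj2]].
    { exists s. intros q [->| ->]; auto. }
    exists j. split; [|split].
    - intros u Hu. apply Hj2. intros q [->| ->]; auto.
    - apply Hj1; left; auto.
    - apply Hj1; right; auto. }
  set (E := fun r => exists x, L x /\ r = h x).
  assert (HEb : bound E).
  { exists (h s). intros r [x [Hx ->]]. apply Hmono. apply Hx; auto. }
  assert (HEne : exists r, E r) by (exists (h p0); exists p0; split; auto).
  destruct (completeness E HEb HEne) as [M [HM1 HM2]].
  assert (HML : forall x, L x -> h x <= M) by (intros x Hx; apply HM1; exists x; auto).
  assert (Happ : forall eta, 0 < eta -> exists x, L x /\ M - eta < h x).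
  { intros eta He. destruct (classic (exists x, L x /\ M - eta < h x)) as [H|H]; auto.
    exfalso. assert (M <= M - eta); [|lra].
    apply HM2. intros r [x [Hx ->]].
    apply Rnot_lt_le. intro Hc. apply H. exists x; auto. }
  assert (Hseq : forall n : nat, exists x, L x /\ M - / (INR n + 1) < h x).
  { intro n. apply Happ. apply Rinv_0_lt_compat. pose proof (pos_INR n). lra. }
  set (f := fun n => proj1_sig (constructive_indefinite_description _ (Hseq n))).
  assert (Hf : forall n, L (f n) /\ M - / (INR n + 1) < h (f n)).
  { intro n. unfold f. destruct (constructive_indefinite_description _ (Hseq n)); auto. }
  assert (Hcauchy : cauchy_seq d f).
  { intros eps He. destruct (Hdisc (eps/2)) as [delta [Hdel Hd]]; [lra|].
    destruct (small_inv delta Hdel) as [N HN]. exists N. intros m n Hm Hn.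
    destruct (Hf m) as [Hm1 Hm2]. destruct (Hf n) as [Hn1 Hn2].
    destruct (Hjoin (f m) (f n) Hm1 Hn1) as [j [Hj [Hmj Hnj]]].
    pose proof (HML j Hj). pose proof (HN m Hm). pose proof (HN n Hn).
    assert (d (f m) j < eps/2) by (apply Hd; auto; lra).
    assert (d (f n) j < eps/2) by (apply Hd; auto; lra).
    pose proof (Htri (f m) j (f n)). rewrite (Hsym j (f n)) in *. lra. }
  destruct (Hcomplete f Hcauchy) as [l Hconv].
  assert (Hdd : forall u, d u u = 0) by (intro u; apply Hdeq; auto).
  assert (HlL : L l).
  { intros u Hu. apply NNPP. intro Hn.
    destruct (Hclosed _ _ Hn) as [r [Hr Hr']].
    destruct (Hconv r Hr) as [N HN].
    apply (Hr' (f N) u).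
    - rewrite Hsym. apply HN. lia.
    - rewrite Hdd. lra.
    - apply (proj1 (Hf N)). auto. }
  assert (HlM : M <= h l).
  { apply Rnot_lt_le. intro Hlt.
    set (eta := (M - h l) / 3).
    assert (Heta : 0 < eta) by (unfold eta; lra).
    destruct (Hcont l eta Heta) as [delta [Hdel Hc]].
    destruct (Hconv delta Hdel) as [N1 HN1].
    destruct (small_inv eta Heta) as [N0 HN0].
    set (n := Nat.max N0 N1).
    assert (d (f n) l < delta) by (apply HN1; unfold n; lia).
    assert (/ (INR n + 1) < eta) by (apply HN0; unfold n; lia).
    pose proof (proj2 (Hf n)).
    assert (Habs : Rabs (h (f n) - h l) < eta) by (apply Hc; rewrite Hsym; auto).
    apply Rabs_def2 in Habs. unfold eta in *. lra. }
  exists l. split.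
  - intros p Hp.
    destruct (Hjoin l p HlL (HPL p Hp)) as [j [Hj [Hlj Hpj]]].
    assert (l = j) by (apply Hkey; auto; pose proof (HML j Hj); lra).
    subst; auto.
  - intros y Hy. apply HlL. exact Hy.
Qed.
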